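(* Let $G$ be an abelian group, $n\ge1$, and $X$ a metric compactum with $\dim_G X\le n$. Let $A\subset X$ be a carrier of a nonzero element of $\check{H}^n(X;G)$ and let $f:X\to X$ be a map homotopic to the identity of $X$. Then $A\subset f(A)$.
   Context: $\check{H}^k(\,\cdot\,;G)$ is reduced Čech cohomology; $\dim_G$ is cohomological dimension. For closed $A\subset X$, $i_A:A\hookrightarrow X$ is the inclusion. A closed nonempty set $A\subset X$ is a (cohomological) carrier of a nonzero $\alpha\in\check{H}^n(X;G)$ if $i_A^*(\alpha)\neq0$ and $i_B^*(\alpha)=0$ for every proper closed subset $B\subsetneq A$. *)

(* Defs.v *)
From HB Require Import structures.
From mathcomp Require Import all_boot all_order all_algebra.
From mathcomp Require Import all_classical all_reals all_analysis.
Set Implicit Arguments. Unset Strict Implicit. Unset Printing Implicit Defensive.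
Import Order.TTheory GRing.Theory Num.Theory.
Local Open Scope classical_set_scope.
Local Open Scope ring_scope.

Section Cech.
Variables (T : topologicalType) (G : zmodType).

(* A finite open cover of the subset S of T, indexed by 'I_m, by open
   subsets of T (their traces on S give all finite open covers of S). *)
Definition open_cover_of (S : set T) (m : nat) (U : 'I_m -> set T) : Prop :=
  (forall i, open (U i)) /\ S `<=` \bigcup_i U i.

Definition nerve_simplex (S : set T) (m : nat) (U : 'I_m -> set T)
  (s : seq 'I_m) : Prop :=
  exists x, S x /\ forall i, i \in s -> U i x.

(* G-valued ordered cochains on index sequences; the degree is given by the
   length of the sequence (a p-cochain is evaluated on sequences of size p+1). *)
Definition cochain (m : nat) := seq 'I_m -> G.

Definition face (m : nat) (i : nat) (s : seq 'I_m) : seq 'I_m :=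
  take i s ++ drop i.+1 s.

Definition coboundary (m : nat) (c : cochain m) : cochain m :=
  fun s => \sum_(i < size s) (if odd i then - c (face i s) else c (face i s)).

Definition is_cocycle (S : set T) (m : nat) (U : 'I_m -> set T) (p : nat)
  (c : cochain m) : Prop :=
  forall s, size s = p.+2 -> nerve_simplex S U s -> coboundary c s = 0.

Definition is_coboundary (S : set T) (m : nat) (U : 'I_m -> set T) (p : nat)
  (c : cochain m) : Prop :=
  exists b : cochain m, forall s, size s = p.+1 -> nerve_simplex S U s ->
    c s = coboundary b s.

Definition refines_via (S : set T) (m m' : nat) (V : 'I_m' -> set T)
  (U : 'I_m -> set T) (lam : 'I_m' -> 'I_m) : Prop :=
  forall j, S `&` V j `<=` U (lam j).

(* The image of the Čech class [c] (c a p-cocycle of the nerve of a cover U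
   of T) in Ȟ^p(S;G) (S closed; this is i_S^* [c] = 0) is zero: after passing to some finite
   open cover of S refining U|S, the pulled-back cocycle is a coboundary.  *)
Definition restr_class_zero (S : set T) (m : nat) (U : 'I_m -> set T)
  (p : nat) (c : cochain m) : Prop :=
  exists (m' : nat) (V : 'I_m' -> set T) (lam : 'I_m' -> 'I_m),
    open_cover_of S V /\ refines_via S V U lam /\
    is_coboundary S V p (fun s => c (map lam s)).

(* A Čech class of Ȟ^p(T;G), represented by a cover and a cocycle. *)
Definition cech_class (m : nat) (U : 'I_m -> set T) (p : nat) (c : cochain m)
  : Prop := open_cover_of setT U /\ is_cocycle setT U p c.

Definition carrier (m : nat) (U : 'I_m -> set T) (p : nat) (c : cochain m)
  (A : set T) : Prop :=
  closed A /\ A !=set0 /\ ~ restr_class_zero A U p c /\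
  forall B : set T, closed B -> B `<` A -> restr_class_zero B U p c.

(* Relative Čech cohomology Ȟ^(n+1)(T, A; G) vanishes: every relative
   (n+1)-cocycle (vanishing on the nerve of U|A) becomes, on some refinement,
   the coboundary of a relative n-cochain. *)
Definition rel_cech_vanishes (A : set T) (p : nat) : Prop :=
  forall (m : nat) (U : 'I_m -> set T) (c : cochain m),
    open_cover_of setT U -> is_cocycle setT U p c ->
    (forall s, size s = p.+1 -> nerve_simplex A U s -> c s = 0) ->
    exists (m' : nat) (V : 'I_m' -> set T) (lam : 'I_m' -> 'I_m),
      open_cover_of setT V /\ refines_via setT V U lam /\
      exists b : cochain m',
        (forall s, size s = p -> nerve_simplex A V s -> b s = 0) /\
        forall s, size s = p.+1 -> nerve_simplex setT V s ->
          c (map lam s) = coboundary b s.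

(* dim_G T <= n :  Ȟ^(n+1)(T, A; G) = 0 for every closed A. *)
Definition cohom_dim_le (n : nat) : Prop :=
  forall A : set T, closed A -> rel_cech_vanishes A n.+1.

End Cech.

(* Main.v *)
Require Import Defs.
From HB Require Import structures.
From mathcomp Require Import all_boot all_order all_algebra.
From mathcomp Require Import all_classical all_reals all_analysis.
From mathcomp Require Import finmap.
Set Implicit Arguments. Unset Strict Implicit. Unset Printing Implicit Defensive.
Import Order.TTheory GRing.Theory Num.Theory.
Local Open Scope classical_set_scope.
Local Open Scope ring_scope.
Section Alg.
Variable G : zmodType.

Lemma cob_nil m (c : cochain G m) : coboundary c [::] = 0.
Proof. by rewrite /coboundary big_ord0. Qed.

Lemma cob_cons m (c : cochain G m) a s :
  coboundary c (a :: s) = c s - coboundary (fun t => c (a :: t)) s.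
Proof.
rewrite /coboundary big_ord_recl /= /face /= drop0 -sumrN; congr (_ + _).
apply: eq_bigr => i _ /=; rewrite /bump /= add0n add1n /=.
by case: (odd i) => /=; rewrite ?opprK.
Qed.

Lemma cob_ext m (c1 c2 : cochain G m) s :
  (forall i, (i < size s)%N -> c1 (face i s) = c2 (face i s)) ->
  coboundary c1 s = coboundary c2 s.
Proof. by move=> h; apply: eq_bigr => i _; rewrite h. Qed.

Lemma cob_sub m (c1 c2 : cochain G m) s :
  coboundary (fun t => c1 t - c2 t) s = coboundary c1 s - coboundary c2 s.
Proof.
rewrite /coboundary -sumrB; apply: eq_bigr => i _.
by case: (odd i); rewrite ?opprB ?opprD ?opprK // addrC.
Qed.

Lemma cob_add m (c1 c2 : cochain G m) s :
  coboundary (fun t => c1 t + c2 t) s = coboundary c1 s + coboundary c2 s.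
Proof.
rewrite /coboundary -big_split; apply: eq_bigr => i _.
by case: (odd i); rewrite ?opprD.
Qed.

Lemma cob0 m s : coboundary (fun _ : seq 'I_m => (0 : G)) s = 0.
Proof. by rewrite /coboundary big1 // => i _; case: (odd i); rewrite ?oppr0. Qed.

Lemma cob_map m m' (g : 'I_m' -> 'I_m) (c : cochain G m) s :
  coboundary (fun t => c (map g t)) s = coboundary c (map g s).
Proof.
elim: s c => [|a s IH] c; first by rewrite !cob_nil.
rewrite /= !cob_cons; congr (_ - _).
exact: (IH (fun t => c (g a :: t))).
Qed.

Lemma cobcob m (c : cochain G m) s : coboundary (coboundary c) s = 0.
Proof.
elim: s c => [|a s IH] c; first by rewrite cob_nil.
rewrite cob_cons.
have -> : (fun t => coboundary c (a :: t)) =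
   (fun t => c t - coboundary (fun u => c (a :: u)) t).
  by apply: funext => t; rewrite cob_cons.
by rewrite cob_sub IH subr0 subrr.
Qed.

Fixpoint prism m m' (g h : 'I_m' -> 'I_m) (d : cochain G m) (s : seq 'I_m')
  {struct s} : G :=
  match s with
  | [::] => 0
  | a :: s' => d (g a :: h a :: map h s') - prism g h (fun t => d (g a :: t)) s'
  end.

Lemma sub4 (a b c e : G) : a - b - (c - e) = (a - c) - (b - e).
Proof. by rewrite !opprB addrACA [RHS]addrACA [- c + _]addrC. Qed.

Lemma alg6 (p q y z u v : G) :
  p - (z - (y - v - q)) + (u - (y - z) - (p - q)) = u - v.
Proof.
rewrite !opprB.
rewrite [u - _]addrC -!addrA. rewrite [p + _]addrC. rewrite !addrA.
rewrite subrK (addrAC _ (-y) q) (addrAC _ z q) (addrAC _ u q) (addrAC _ (-z) q) subrK.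
rewrite (addrAC _ u z) addrNK (addrAC _ u (-y)) (addrAC _ (-v) (-y)) subrr add0r addrC.
by [].
Qed.

Lemma prism_sub m m' (g h : 'I_m' -> 'I_m) (d1 d2 : cochain G m) s :
  prism g h (fun t => d1 t - d2 t) s = prism g h d1 s - prism g h d2 s.
Proof.
elim: s d1 d2 => [|a s IH] d1 d2 /=; first by rewrite subr0.
rewrite (IH (fun t => d1 (g a :: t)) (fun t => d2 (g a :: t))).
by rewrite sub4.
Qed.

Lemma prism_ext m m' (g h : 'I_m' -> 'I_m) (d1 d2 : cochain G m) s :
  (forall t, d1 t = d2 t) -> prism g h d1 s = prism g h d2 s.
Proof. by move=> e; have -> : d1 = d2 by apply: funext. Qed.

Lemma prism_id m m' (g h : 'I_m' -> 'I_m) (d : cochain G m) s :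
  coboundary (prism g h d) s + prism g h (coboundary d) s =
  d (map h s) - d (map g s).
Proof.
elim: s d => [|a s IH] d; first by rewrite cob_nil /= add0r subrr.
rewrite cob_cons /=.
set da := fun t => d (g a :: t).
have -> : coboundary (fun t => prism g h d (a :: t)) s =
  coboundary (fun u => d (g a :: h a :: u)) (map h s) - coboundary (prism g h da) s.
  by rewrite -(cob_map h (fun u => d (g a :: h a :: u))) -cob_sub.
rewrite (cob_cons d (g a)) (cob_cons da (h a)).
rewrite (@prism_ext _ _ g h (fun t => coboundary d (g a :: t))
   (fun t => d t - coboundary da t)); last by move=> t; rewrite cob_cons.
rewrite prism_sub.
have := IH da; rewrite /da /= => IH'.
set X1 := prism g h d s. set X2 := coboundary _ (map h s).
set X3 := coboundary (prism g h da) s. set X4 := prism g h (coboundary da) s.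
have -> : X3 = d (g a :: map h s) - d (g a :: map g s) - X4 by rewrite -IH' addrK.
set Y := d (g a :: map h s).
rewrite /X2 /=.
set Z := coboundary _ (map h s).
exact: alg6.
Qed.

Lemma mem_face m i (s : seq 'I_m) x : x \in face i s -> x \in s.
Proof.
rewrite /face mem_cat => /orP [/mem_take|/mem_drop] //.
Qed.

Lemma size_face m i (s : seq 'I_m) : (i < size s)%N -> size (face i s) = (size s).-1.
Proof.
move=> hi; rewrite /face size_cat size_take size_drop hi.
by move: hi; case: (size s) => // k hi; rewrite subSS subnKC.
Qed.

Lemma prism_vanish m m' (g h : 'I_m' -> 'I_m) (d : cochain G m) s :
  (forall t, size t = (size s).+1 -> {subset t <= map g s ++ map h s} -> d t = 0) ->
  prism g h d s = 0.
Proof.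
elim: s d => [|a s IH] d hd //=.
rewrite hd ?IH ?subr0 //=.
- move=> t st sub; apply: hd; first by rewrite /= st.
  move=> y; rewrite inE => /orP [/eqP ->|/sub]; first by rewrite mem_head.
  rewrite !mem_cat /= !in_cons => /orP [->|->]; by rewrite ?orbT.
- by rewrite size_map.
- move=> y; rewrite !in_cons mem_cat /= !in_cons.
  by case/orP => [->|/orP [->|->]]; rewrite ?orbT.
Qed.
End Alg.

Definition pcopy (T : topologicalType) (x : T) : Type := T.
Arguments pcopy {T} x.
HB.instance Definition _ (T : topologicalType) (x : T) :=
  Topological.copy (pcopy x) T.
HB.instance Definition _ (T : topologicalType) (x : T) :=
  isPointed.Build (pcopy x) x.

Lemma cover_of_compact {T : topologicalType} (A : set T) (I : choiceType) (D : set I) (f : I -> set T) :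
  compact A -> (forall i, D i -> open (f i)) -> A `<=` cover D f ->
  finite_subset_cover D f A.
Proof.
move=> cA fo; case: (pselect (A !=set0)) => [[x0 Ax0]|A0].
  have cA' : @compact (pcopy x0) A by [].
  rewrite compact_cover in cA'.
  exact: cA' fo.
by move=> _; exists fset0 => // x Ax; exfalso; apply: A0; exists x.
Qed.

Lemma bigmin_mem (R : realDomainType) (I : eqType) (r : seq I) (F : I -> R) x p :
  p \in r -> \big[Order.min/x]_(i <- r) F i <= F p.
Proof.
elim: r => // a r IH; rewrite in_cons big_cons => /orP [/eqP->|/IH h].
  by rewrite ge_min lexx.
by rewrite ge_min h orbT.
Qed.

Lemma lebesgue (R : realType) (T : pseudoMetricType R) (S : set T)
  (I : Type) (K : I -> set T) :
  compact S ->
  (forall p, S p -> exists e, 0 < e /\ exists i, ball p e `<=` K i) ->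
  exists d, 0 < d /\ forall q, S q -> exists i, ball q d `<=` K i.
Proof.
move=> cS hp.
have [e he] : exists e : T -> R, forall p, S p -> 0 < e p /\ exists i, ball p (e p) `<=` K i.
  have hc : forall p, exists r, S p -> 0 < r /\ exists i, ball p r `<=` K i.
    move=> p; case: (pselect (S p)) => Sp; last by exists 1.
    by have [r [r0 hr]] := hp p Sp; exists r.
  by have [f hf] := choice hc; exists f.
have := @cover_of_compact T S T S (fun p => (ball p (e p / 2))°) cS.
case.
- by move=> p _; exact: open_interior.
- move=> q Sq; exists q => //.
  apply: nbhsx_ballx.
  by apply: divr_gt0 => //; case: (he q Sq).
move=> D DS Scov.
exists (\big[Order.min/1]_(p <- D) (e p / 2)); split.
  rewrite big_seq; elim/big_rec: _ => // p x /DS; rewrite in_setE => Sp x0.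
  rewrite lt_min x0 andbT; apply: divr_gt0 => //; by case: (he p Sp).
move=> q /Scov [p /= Dp /interior_subset bpq].
have Sp : S p by have := DS _ Dp; rewrite in_setE.
have [ep [i hi]] := he p Sp.
exists i => y qy; apply: hi.
have := ball_triangle bpq qy; apply: le_ball.
rewrite [leRHS](splitr (e p)) lerD2l.
exact: bigmin_mem.
Qed.

Lemma finite_net (R : realType) (T : pseudoMetricType R) (S : set T) (d : R) :
  compact S -> 0 < d -> exists D : seq T, forall q, S q -> exists2 p, p \in D & ball p d q.
Proof.
move=> cS d0.
have := @cover_of_compact T S T S (fun p => (ball p d)°) cS.
case.
- by move=> p _; exact: open_interior.
- by move=> q Sq; exists q => //; apply: nbhsx_ballx.
move=> D _ Scov; exists (D : seq T) => q /Scov [p /= Dp /interior_subset bpq].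
by exists p.
Qed.

Section Homot.
Import numFieldNormedType.Exports.

Lemma homotopy_cover (R : realType) (X : metricType R) (m3 : nat)
  (V2 : 'I_m3 -> set X) (H : X * R -> X) (x0 : X) :
  compact [set: X] -> (forall r, open (V2 r)) -> (forall x, exists r, V2 r x) ->
  {within [set: X] `*` `[0, 1], continuous H} ->
  exists m4 (W : 'I_m4 -> set X) (k : nat) (lam : nat -> 'I_m4 -> 'I_m3),
    (0 < k)%N /\ (forall j, open (W j)) /\ (forall x, exists j, W j x) /\
    forall i j x t, (i < k)%N -> W j x -> 0 <= t <= 1 ->
      i%:R / k%:R <= t <= i.+1%:R / k%:R -> V2 (lam i j) (H (x, t)).
Proof.
move=> cX Vop Vcov hH.
set S := [set: X] `*` `[0, (1:R)].
have cS : compact S by apply: compact_setX => //; exact: segment_compact.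
set K := fun r => [set q | S q -> V2 r (H q)].
have [d [d0 hd]] : exists d, 0 < d /\ forall q, S q -> exists r, ball q d `<=` K r.
  apply: lebesgue => // p Sp.
  have [r Hr] := Vcov (H p).
  have := (subspace_continuousP _ H).1 hH p Sp.
  move=> /(_ (V2 r)) hn.
  have /hn : nbhs (H p) (V2 r) by apply: open_nbhs_nbhs; split.
  move=> /nbhs_ballP [e e0 he]; exists e; split => //; exists r.
  by move=> q /he.
have [D hD] := finite_net cX (divr_gt0 d0 (ltr0n _ 2)).
have [k0 hk0] : exists k : nat, d^-1 < k%:R.
  exists (Num.Def.archi_bound d^-1); apply: archi_boundP.
  by rewrite invr_ge0 ltW.
set k := k0.+1.
have kpos : (0 < k)%N by [].
have hk : k%:R^-1 < d.
  rewrite -[d]invrK ltf_pV2 ?posrE ?invr_gt0 //.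
  by apply: (lt_le_trans hk0); rewrite ler_nat.
have [r0 _] := Vcov x0.
have hc : forall ij : nat * 'I_(size D), exists r : 'I_m3,
    (ij.1 <= k)%N -> ball ((nth x0 D ij.2, ij.1%:R / k%:R) : X * R) d `<=` K r.
  move=> [i j] /=; case: (boolP (i <= k)%N) => ik; last by exists r0.
  have : S ((nth x0 D j, i%:R / k%:R) : X * R).
    split => //=; rewrite in_itv /= divr_ge0 ?ler0n //=.
    by rewrite ler_pdivrMr ?ltr0n // mul1r ler_nat.
  by move=> /hd [r hr]; exists r.
have [lam hlam] := choice hc.
exists (size D), (fun j => (ball (nth x0 D j) d)°), k, (fun i j => lam (i, j)).
split => //; split; first by move=> j; exact: open_interior.
split.
  move=> x; have [p pD bpx] := hD x I.
  have pi : (index p D < size D)%N by rewrite index_mem.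
  exists (Ordinal pi) => /=; rewrite nth_index //.
  apply/nbhs_ballP; exists (d / 2); first by apply: divr_gt0.
  move=> y xy; have := ball_triangle bpx xy; by rewrite -splitr.
move=> i j x t ik /interior_subset Wx /andP [t0 t1] /andP [it ti].
have := hlam (i, j) (ltnW ik) ((x, t) : X * R).
have Sxt : S ((x, t) : X * R).
  by split => //=; rewrite in_itv /= t0 t1.
move=> h; apply: (h _ Sxt); split => //=.
rewrite /ball /= distrC ger0_norm ?subr_ge0 //.
apply: (le_lt_trans _ hk); rewrite lerBlDl.
by rewrite -[X in _ + X]mul1r -mulrDl natr1.
Qed.
End Homot.

Section Shrink.
Variables (R : realType) (X : metricType R).

Definition Pset (B V : set X) : set X :=
  ([set x | exists b e, B b /\ 0 < e /\ ball b (e + e) `<=` V /\ ball b e x])°.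

Lemma Pset_open B V : open (Pset B V).
Proof. exact: open_interior. Qed.

Lemma Pset_cov B V b : B b -> open V -> V b -> Pset B V b.
Proof.
move=> Bb Vo Vb.
have : nbhs b V by apply: open_nbhs_nbhs; split.
move=> /nbhs_ballP [e e0 he].
apply/nbhs_ballP; exists (e / 2); first by apply: divr_gt0.
move=> y by_; exists b, (e / 2); split => //; split; first by apply: divr_gt0.
by split => //; rewrite -splitr.
Qed.

Lemma Pset_shrink (m1 : nat) (B : set X) (V : 'I_m1 -> set X) x (s : seq 'I_m1) :
  s != [::] -> (forall j, j \in s -> Pset B (V j) x) ->
  exists b, B b /\ forall j, j \in s -> V j b.
Proof.
case: s => // a s _.
suff : forall a, (forall j, j \in a :: s -> Pset B (V j) x) ->
  exists b e, B b /\ ball b e x /\ forall j, j \in a :: s ->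
    exists bj ej, e <= ej /\ ball bj ej x /\ ball bj (ej + ej) `<=` V j.
  move=> h /h [b [e [Bb [bx hj]]]]; exists b; split => // j /hj [bj [ej [eej [bjx hV]]]].
  apply: hV; have := ball_triangle bjx (ball_sym bx); apply: le_ball.
  by rewrite lerD2l.
clear a; elim: s => [|c s IH] a hP.
  have /interior_subset [b [e [Bb [e0 [hV bx]]]]] := hP a (mem_head _ _).
  exists b, e; split => //; split => // j; rewrite inE => /eqP ->.
  by exists b, e.
have /interior_subset [ba [ea [Bba [ea0 [hVa bax]]]]] := hP a (mem_head _ _).
have [b [e [Bb [bx hj]]]] := IH c (fun j hj => hP j (@mem_behead _ (a :: c :: s) j hj)).
case: (leP ea e) => hle.
  exists ba, ea; split => //; split => // j; rewrite in_cons => /orP [/eqP ->|/hj].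
    by exists ba, ea.
  move=> [bj [ej [eej rest]]]; exists bj, ej; split => //.
  exact: le_trans eej.
exists b, e; split => //; split => // j; rewrite in_cons => /orP [/eqP ->|/hj //].
by exists ba, ea; split => //; exact: ltW.
Qed.
End Shrink.

Section Comb.
Variables (R : realType) (X : metricType R) (G : zmodType) (n m : nat)
  (U : 'I_m -> set X) (c : cochain G m) (A Z : set X)
  (m1 : nat) (V : 'I_m1 -> set X) (lam : 'I_m1 -> 'I_m) (b1 : cochain G m1).
Hypothesis hUo : forall i, open (U i).
Hypothesis hAc : closed A.
Hypothesis hZc : closed Z.
Hypothesis hVo : forall j, open (V j).
Hypothesis hVref : forall j, (A `&` Z) `&` V j `<=` U (lam j).
Hypothesis hb1 : forall s, size s = n.+1 -> nerve_simplex (A `&` Z) V s ->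
  c (map lam s) = coboundary b1 s.

Local Notation N := (m1 + (m + m))%N.

Definition CC (k : 'I_N) : set X :=
  match fintype.split k with
  | inl j => Pset (A `&` Z) (V j) `&` U (lam j)
  | inr r => match fintype.split r with inl i => U i `\` Z | inr i => U i `\` A end
  end.

Definition LL (k : 'I_N) : 'I_m :=
  match fintype.split k with
  | inl j => lam j
  | inr r => match fintype.split r with inl i => i | inr i => i end
  end.

Definition unP (k : 'I_N) : option 'I_m1 :=
  match fintype.split k with inl j => Some j | inr _ => None end.

Definition inP (j : 'I_m1) : 'I_N := lshift (m + m) j.

Lemma unP_inP j : unP (inP j) = Some j.
Proof. by rewrite /unP /inP -/(fintype.unsplit (inl j)) fintype.unsplitK. Qed.

Lemma LL_inP j : LL (inP j) = lam j.
Proof. by rewrite /LL /inP -/(fintype.unsplit (inl j)) fintype.unsplitK. Qed.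

Lemma CC_inP j : CC (inP j) = Pset (A `&` Z) (V j) `&` U (lam j).
Proof. by rewrite /CC /inP -/(fintype.unsplit (inl j)) fintype.unsplitK. Qed.

Lemma CC_sub k : CC k `<=` U (LL k).
Proof.
rewrite /CC /LL; case: (fintype.split k) => [j|r]; first by move=> x [].
by case: (fintype.split r) => i x [].
Qed.

Lemma CC_open k : open (CC k).
Proof.
rewrite /CC; case: (fintype.split k) => [j|r].
  by apply: openI => //; exact: Pset_open.
by case: (fintype.split r) => i; rewrite setDE; apply: openI => //;
  exact: closed_openC.
Qed.

Lemma CC_Q i : CC (rshift m1 (lshift m i)) = U i `\` Z.
Proof.
rewrite /CC -/(fintype.unsplit (inr (lshift m i))) fintype.unsplitK.
by rewrite -/(fintype.unsplit (inl i)) fintype.unsplitK.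
Qed.

Lemma CC_R i : CC (rshift m1 (rshift m i)) = U i `\` A.
Proof.
rewrite /CC -/(fintype.unsplit (inr (rshift m i))) fintype.unsplitK.
by rewrite -/(fintype.unsplit (inr i)) fintype.unsplitK.
Qed.

Hypothesis hUcov : forall x, exists i, U i x.
Hypothesis hVcov : A `&` Z `<=` \bigcup_j V j.

Lemma CC_cov x : exists k, CC k x.
Proof.
have [i Ui] := hUcov x.
case: (pselect (Z x)) => Zx; last by exists (rshift m1 (lshift m i)); rewrite CC_Q.
case: (pselect (A x)) => Ax; last by exists (rshift m1 (rshift m i)); rewrite CC_R.
have [j _ Vj] := hVcov (conj Ax Zx).
exists (inP j); rewrite CC_inP; split; first exact: Pset_cov.
exact: hVref.
Qed.

Definition isP (k : 'I_N) : bool := unP k != None.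

Definition bt (s : seq 'I_N) : G :=
  if all isP s then b1 (pmap unP s) else 0.

Definition ee (s : seq 'I_N) : G :=
  if pselect (exists x, A x /\ forall i, i \in s -> CC i x)
  then c (map LL s) - coboundary bt s else 0.

Lemma unP_some k j : unP k = Some j -> k = inP j.
Proof.
rewrite /unP /inP; case E: (fintype.split k) => [j'|r] // [<-].
by rewrite -(fintype.splitK k) E.
Qed.

Lemma allP_map s : all isP s -> s = map inP (pmap unP s).
Proof.
elim: s => //= k s IH /andP [hk hs].
rewrite /isP in hk; case E: (unP k) hk => [j|] // _ /=.
by rewrite -(unP_some E) -IH.
Qed.

Lemma bt_map w : bt (map inP w) = b1 w.
Proof.
rewrite /bt; have -> : all isP (map inP w).
  by apply/allP => k /mapP [j _ ->]; rewrite /isP unP_inP.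
congr b1; elim: w => //= j w IH; by rewrite unP_inP /= IH.
Qed.

Lemma eeZ s : size s = n.+1 -> (exists z, Z z /\ forall i, i \in s -> CC i z) ->
  ee s = 0.
Proof.
move=> ss [z [Zz hz]]; rewrite /ee; case: pselect => [hh|] //=; have [x [Ax hx]] := hh.
have allp : all isP s.
  apply/allP => k ks; rewrite /isP /unP.
  move: (hz k ks) (hx k ks); rewrite /CC; case: (fintype.split k) => // r.
  case: (fintype.split r) => i [_ nZ] [_ nA]; by [case: nZ | case: nA].
have es := allP_map allp; set w := pmap unP s in es.
have sw : size w = n.+1 by rewrite -ss es size_map.
have hw : forall j, j \in w -> Pset (A `&` Z) (V j) x.
  move=> j jw; have : inP j \in s by rewrite es map_f.
  by move=> /hx; rewrite CC_inP => -[].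
rewrite es -map_comp -cob_map.
have -> : (fun t => bt (map inP t)) = b1 by apply: funext => t; exact: bt_map.
have -> : map (LL \o inP) w = map lam w by apply: eq_map => j /=; rewrite LL_inP.
rewrite hb1 ?subrr //.
have [|b [ABb hb]] := Pset_shrink (s:=w) _ hw; first by rewrite -size_eq0 sw.
by exists b.
Qed.

Hypothesis hc : is_cocycle setT U n c.

Lemma ee_cocycle t : size t = n.+2 -> nerve_simplex (A `|` Z) CC t ->
  coboundary ee t = 0.
Proof.
move=> st [y [AZy hy]].
case: (pselect (exists x, A x /\ forall i, i \in t -> CC i x)) => [[x [Ax hx]]|nA].
  rewrite (@cob_ext _ _ ee (fun s => c (map LL s) - coboundary bt s)); last first.
    move=> i _; rewrite /ee; case: pselect => // nA; exfalso; apply: nA.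
    by exists x; split => // k /mem_face /hx.
  rewrite cob_sub cobcob subr0 cob_map; apply: hc; first by rewrite size_map.
  by exists x; split => // k /mapP [j /hx /CC_sub hj ->].
have Zy : Z y.
  case: AZy => // Ay; exfalso; apply: nA; by exists y.
rewrite (@cob_ext _ _ ee (fun _ => 0)) ?cob0 //.
move=> i it; apply: eeZ; first by rewrite size_face // st.
by exists y; split => // k /mem_face /hy.
Qed.

End Comb.

Unset Implicit Arguments.

Theorem proposition2p3 (R : realType) (X : metricType R) (G : zmodType)
  (n : nat) (hn : (1 <= n)%N)
  (hcomp : compact [set: X])
  (hdim : cohom_dim_le X G n)
  (m : nat) (U : 'I_m -> set X) (c : cochain G m)
  (halpha : cech_class U n c)
  (hnz : ~ restr_class_zero [set: X] U n c)
  (A : set X) (hA : carrier U n c A)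
  (f : X -> X) (hf : continuous f)
  (H : X * R -> X)
  (hH : {within [set: X] `*` `[0, 1], continuous H})
  (hH0 : forall x, H (x, 0) = f x)
  (hH1 : forall x, H (x, 1) = x) :
  A `<=` f @` A.
Proof.
move=> a Aa; apply: contrapT => naZ.
set Z := f @` A.
have [Ac [An [hnzA hmin]]] := hA.
have [[Uop Ucov] hc] := halpha.
have Ucov' : forall x, exists i, U i x by move=> x; have [i _ ?] := Ucov x I; exists i.
have cA : compact A := subclosed_compact Ac hcomp (@subsetT _ A).
have Zc : closed Z.
  apply: compact_closed; first exact: metric_hausdorff.
  exact: continuous_compact (continuous_subspaceT hf) cA.
have hB : restr_class_zero (A `&` Z) U n c.
  apply: hmin; first exact: closedI.
  split; first by move=> x [].

  by move=> h; have [] := h a Aa.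
have [m1 [V [lam [[Vop Vcov] [Vref [b1 hb1]]]]]] := hB.
pose C := CC U A Z V lam.
pose E := ee U c A Z V lam b1.
have := hdim (A `|` Z) (closedU Ac Zc) _ C (coboundary E).
case.
- split; first exact: CC_open.
  by move=> x _; have [k hk] := CC_cov Vop Vref Ucov' Vcov x; exists k.
- by move=> s _ _; exact: cobcob.
- by move=> s ss hs; exact: (ee_cocycle hb1 hc ss hs).
move=> m3 [V2 [lam2 [[V2op V2cov] [ref2 [b' [hb'0 hb']]]]]].
pose d := fun s => E (map lam2 s) - b' s.
have dcoc : forall s, size s = n.+2 -> nerve_simplex setT V2 s -> coboundary d s = 0.
  by move=> s ss hs; rewrite /d cob_sub cob_map hb' // subrr.
have V2cov' : forall x, exists r, V2 r x.
  by move=> x; have [r _ ?] := V2cov x I; exists r.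
have [m4 [W [k [lamh [kpos [Wop [Wcov hW]]]]]]] := homotopy_cover a hcomp V2op V2cov' hH.
have kR : (0 : R) < k%:R by rewrite ltr0n.
have hW0 : forall j x, W j x -> V2 (lamh 0%N j) (f x).
  move=> j x Wx; rewrite -hH0; apply: hW => //; first by rewrite lexx ler01.
  by rewrite mul0r lexx /= divr_ge0 ?ler0n.
have hW1 : forall j x, W j x -> V2 (lamh k.-1 j) x.
  move=> j x Wx; rewrite -[X in V2 _ X](hH1 x); apply: hW => //; first by rewrite prednK.
    by rewrite lexx ler01.
  rewrite prednK // divff ?lexx ?andbT; last by rewrite gt_eqF.
  by rewrite ler_pdivrMr // mul1r ler_nat leq_pred.
have hWc : forall i j x, (i.+1 < k)%N -> W j x ->
    V2 (lamh i j) (H (x, i.+1%:R / k%:R)) /\ V2 (lamh i.+1 j) (H (x, i.+1%:R / k%:R)).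
  move=> i j x ik Wx.
  have t01 : 0 <= (i.+1%:R / k%:R : R) <= 1.
    apply/andP; split; first by apply: divr_ge0; rewrite ler0n.
    by rewrite ler_pdivrMr // mul1r ler_nat ltnW.
  split; apply: hW => //; first exact: ltnW.
    by rewrite lexx andbT ler_pM2r ?invr_gt0 // ler_nat.
  by rewrite lexx /= ler_pM2r ?invr_gt0 // ler_nat.
have tel : forall i, (i < k)%N -> exists beta : cochain G m4,
    forall s, size s = n.+1 -> nerve_simplex A W s ->
      d (map (lamh i) s) = coboundary beta s.
  elim=> [_|i IH hi].
    exists (fun _ => 0) => s ss [x [Ax hx]]; rewrite cob0 /d.
    rewrite hb'0 ?size_map //; last first.
      exists (f x); split; first by right; exists x.
      by move=> r /mapP [j /hx /hW0 h ->].
    rewrite /E (eeZ hb1) ?subrr ?size_map //.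
    exists (f x); split; first by exists x.
    move=> r /mapP [r' /mapP [j /hx /hW0 h ->] ->].
    by apply: ref2; split.
  have [beta hbeta] := IH (ltnW hi).
  exists (fun s => beta s + prism (lamh i) (lamh i.+1) d s).
  move=> s ss hs; rewrite cob_add -hbeta //.
  have := prism_id (lamh i) (lamh i.+1) d s.
  rewrite (prism_vanish (g:=lamh i) (h:=lamh i.+1) (d:=coboundary d) (s:=s)) ?addr0.
    by move=> ->; rewrite addrC subrK.
  move=> t st sub; apply: dcoc; first by rewrite st ss.
  have [x [Ax hx]] := hs.
  exists (H (x, i.+1%:R / k%:R)); split => // r /sub; rewrite mem_cat.
  case/orP => /mapP [j /hx Wj ->]; by have [] := hWc i j x hi Wj.
have [beta hbeta] : exists beta : cochain G m4, forall s, size s = n.+1 -> nerve_simplex A W s -> d (map (lamh k.-1) s) = coboundary beta s.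
  by apply: tel; rewrite prednK.
set L := lamh k.-1.
apply: hnzA.
exists m4, W, (fun j => LL lam (lam2 (L j))).
split; first by split => // x _; have [j hj] := Wcov x; exists j.
split.
  move=> j x [Ax Wx]; apply: CC_sub; apply: ref2; split => //; exact: hW1.
exists (fun s => beta s + bt b1 (map (lam2 \o L) s)).
move=> s ss hs; have [x [Ax hx]] := hs.
rewrite cob_add -hbeta // cob_map.
set u := map (lam2 \o L) s.
have hu : E u = c (map (LL lam) u) - coboundary (bt b1) u.
  rewrite /E /ee; case: pselect => //= nn; exfalso; apply: nn.
  exists x; split => // r /mapP [j /hx Wj ->]; apply: ref2; split => //.
  exact: hW1.
have hd : d (map L s) = E u.
  rewrite /d hb'0 ?size_map ?subr0 //; last first.
    by exists x; split; [left | move=> r /mapP [j /hx Wj ->]; exact: hW1].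
  by rewrite -map_comp.
rewrite hd hu subrK /u -map_comp.
by [].
Qed.
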